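(* Let $a,d\in\mathbb{N}$ and $n,m\ge 1$. Consider the Pólya–Eggenberger urn with ball transition matrix $\begin{pmatrix}-a&0\\0&-d\end{pmatrix}$ started with $a n$ white and $d m$ black balls, and let $Y_{an,dm}$ be the number of white balls remaining when the process stops. Then for $0\le k\le n$, \[ \mathbb{P}\{Y_{an,dm}=ak\}=\sum_{\ell=1}^{m}(-1)^{\ell-1}\frac{\binom{m}{\ell}\binom{k-1+\frac{\ell d}{a}}{k}}{\binom{n+\frac{\ell d}{a}}{n}}=\sum_{\ell=k}^{n}(-1)^{\ell-k}\frac{\binom{n}{\ell}\binom{\ell}{k}}{\binom{m+\frac{\ell a}{d}}{m}}. \] Moreover, the normalized random variable $\hat Y_{an,dm}=Y_{an,dm}/a$ satisfies, for every integer $s\ge 1$, \[ \mathbb{E}\big(\hat Y_{an,dm}^{\underline{s}}\big)=\frac{n^{\underline{s}}}{\binom{m+\frac{as}{d}}{m}},\qquad \mathbb{E}\big(\hat Y_{an,dm}^{s}\big)=\sum_{j=0}^{s}{s\brace j}\frac{n^{\underline{j}}}{\binom{m+\frac{aj}{d}}{m}}. \]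
   Context: The urn: at each step one ball is drawn uniformly at random among all balls present; if it is white, the number of white balls decreases by $a$; if it is black, the number of black balls decreases by $d$ (so from $a n'$ white and $d m'$ black balls, a white ball is drawn with probability $an'/(an'+dm')$). The process stops as soon as the urn contains no white or no black balls; $Y_{an,dm}$ is the number of white balls at that time (so it is $0$ if whites are exhausted first). For real $x$ and integer $k\ge 0$, $x^{\underline{k}}=x(x-1)\cdots(x-k+1)$ denotes the falling factorial and $\binom{x}{k}=x^{\underline{k}}/k!$. ${s\brace j}$ denotes the Stirling numbers of the second kind. *)

(* Defs.v *)
From mathcomp Require Import all_boot all_order all_algebra.
Set Implicit Arguments. Unset Strict Implicit. Unset Printing Implicit Defensive.
Import Order.TTheory GRing.Theory Num.Theory.
Local Open Scope ring_scope.

Definition ffact (R : realFieldType) (x : R) (k : nat) : R :=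
  \prod_(i < k) (x - i%:R).

Definition gbinom (R : realFieldType) (x : R) (k : nat) : R :=
  ffact x k / (k`!)%:R.

Fixpoint stirling2 (s j : nat) : nat :=
  match s, j with
  | 0, 0 => 1
  | 0, _ => 0
  | _.+1, 0 => 0
  | s'.+1, j'.+1 => j'.+1 * stirling2 s' j'.+1 + stirling2 s' j'
  end%N.

(* Law of the urn with ball transition matrix diag(-a,-d).
   urnP a d n m k = P{ Y_{a n, d m} = a k }, i.e. the probability that,
   starting from a*n white and d*m black balls, the process stops with
   exactly a*k white balls.  One step from (a n', d m') with n',m' >= 1:
   with prob. a n'/(a n' + d m') a white ball is drawn (n' decreases by 1),
   otherwise a black ball is drawn (m' decreases by 1). *)
Fixpoint urnP (R : realFieldType) (a d : nat) (n m k : nat) {struct n} : R :=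
  match n with
  | 0 => (k == 0)%:R
  | n'.+1 =>
    (fix urnPm (m : nat) : R :=
       match m with
       | 0 => (k == n)%:R
       | m'.+1 =>
         (a * n)%:R / (a * n + d * m)%:R * urnP R a d n' m k
         + (d * m)%:R / (a * n + d * m)%:R * urnPm m'
       end) m
  end.

Definition urnE (R : realFieldType) (a d n m : nat) (f : nat -> R) : R :=
  \sum_(k < n.+1) urnP R a d n m k * f k.

(* Main.v *)
Require Import Defs.
From mathcomp Require Import all_boot all_order all_algebra.
From mathcomp Require Import ring lra zify.
Import Order.TTheory GRing.Theory Num.Theory.
Local Open Scope ring_scope.


Lemma ffactS (R : realFieldType) (x : R) j :
  ffact x j.+1 = x * ffact (x - 1) j.
Proof.
rewrite /ffact big_ord_recl /= subr0; congr (_ * _).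
by apply: eq_bigr => i _; rewrite /bump /= -natr1 opprD addrA; ring.
Qed.

Lemma ffactSr (R : realFieldType) (x : R) j :
  ffact x j.+1 = ffact x j * (x - j%:R).
Proof. by rewrite /ffact big_ord_recr. Qed.

Lemma ffact0 (R : realFieldType) (x : R) : ffact x 0 = 1.
Proof. by rewrite /ffact big_ord0. Qed.

Lemma gbinom0 (R : realFieldType) (x : R) : gbinom x 0 = 1.
Proof. by rewrite /gbinom ffact0 fact0 divr1. Qed.

Lemma gbinomS (R : realFieldType) (x : R) j :
  gbinom x j.+1 = x / j.+1%:R * gbinom (x - 1) j.
Proof.
rewrite /gbinom ffactS factS natrM invfM; field.
by rewrite pnatr_eq0 -lt0n fact_gt0 nat1r pnatr_eq0.
Qed.

Lemma gbinomSr (R : realFieldType) (x : R) j :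
  gbinom x j.+1 = gbinom x j * (x - j%:R) / j.+1%:R.
Proof.
rewrite /gbinom ffactSr factS natrM invfM; field.
by rewrite pnatr_eq0 -lt0n fact_gt0 nat1r pnatr_eq0.
Qed.

Lemma gbinom_gt0 (R : realFieldType) (x : R) j :
  0 <= x -> 0 < gbinom (j%:R + x) j.
Proof.
move=> x0; rewrite /gbinom divr_gt0 // ?ltr0n ?fact_gt0 //.
apply: prodr_gt0 => i _.
have : (i%:R : R) < j%:R by rewrite ltr_nat.
lra.
Qed.

Lemma alt_binom (R : realFieldType) n :
  \sum_(i < n.+1) (-1) ^+ i * ('C(n, i)%:R : R) = (n == 0%N)%:R.
Proof.
rewrite -[RHS]expr0n -[X in X ^+ _](addNr (1:R)) exprD1n.
by apply: eq_bigr => i _; rewrite mulr_natr.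
Qed.

Definition recur (R : realFieldType) (a d : nat) (G : nat -> nat -> R) :=
  forall n m, G n.+1 m.+1 =
    (a * n.+1)%:R / (a * n.+1 + d * m.+1)%:R * G n m.+1
    + (d * m.+1)%:R / (a * n.+1 + d * m.+1)%:R * G n.+1 m.
Arguments recur {R}.

Lemma recur_uniq (R : realFieldType) a d (G U : nat -> nat -> R) :
  recur a d G -> recur a d U -> (forall m, G 0%N m = U 0%N m) ->
  (forall n, G n 0%N = U n 0%N) -> forall n m, G n m = U n m.
Proof.
move=> rG rU h0 hn; elim=> [|n IHn] //; elim=> [|m IHm] //.
by rewrite rG rU IHn IHm.
Qed.

Lemma recur_urnP (R : realFieldType) a d k : recur a d (fun n m => urnP R a d n m k).
Proof. by move=> n m. Qed.

Lemma urnP_gt (R : realFieldType) a d n m k : (n < k)%N -> urnP R a d n m k = 0.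
Proof.
elim: n m => [|n IHn] m hk.
  by rewrite /=; case: k hk.
elim: m => [|m IHm].
  by rewrite /=; case: eqP => // E; move: hk; rewrite E ltnn.
rewrite (recur_urnP R a d k n m) IHn ?IHm ?mulr0 ?addr0 //.
exact: ltnW.
Qed.

Lemma recur_urnE (R : realFieldType) a d (f : nat -> R) :
  recur a d (fun n m => urnE a d n m f).
Proof.
move=> n m; rewrite /urnE.
rewrite (eq_bigr (fun k : 'I_n.+2 =>
  (a * n.+1)%:R / (a * n.+1 + d * m.+1)%:R * (urnP R a d n m.+1 k * f k)
  + (d * m.+1)%:R / (a * n.+1 + d * m.+1)%:R * (urnP R a d n.+1 m k * f k))); last first.
  by move=> k _; rewrite (recur_urnP R a d k n m) /=; ring.
rewrite big_split /= -!mulr_sumr big_ord_recr /= urnP_gt // mul0r addr0.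
by [].
Qed.

Lemma urnE_n0 (R : realFieldType) a d (f : nat -> R) m : urnE a d 0%N m f = f 0%N.
Proof. by rewrite /urnE big_ord1 /= mul1r. Qed.

Lemma urnE_m0 (R : realFieldType) a d (f : nat -> R) n : urnE a d n 0%N f = f n.
Proof.
rewrite /urnE big_ord_recr /= big1 ?add0r.
  by case: n => [|n] /=; rewrite ?eqxx mul1r.
move=> [k hk] _ /=; case: n hk => [|n] hk /=; first by case: k hk.
by rewrite (_ : (k == n.+1) = false) ?mul0r //; apply/negbTE; rewrite neq_ltn hk.
Qed.

Lemma recurM (R : realFieldType) a d (G : nat -> nat -> R) : (0 < a)%N ->
  (forall n m, (a * n.+1 + d * m.+1)%:R * G n.+1 m.+1 =
    (a * n.+1)%:R * G n m.+1 + (d * m.+1)%:R * G n.+1 m) -> recur a d G.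
Proof.
move=> a0 h n m.
have nz : ((a * n.+1 + d * m.+1)%:R : R) != 0.
  by rewrite pnatr_eq0 -lt0n addn_gt0 muln_gt0 a0.
apply: (mulfI nz); rewrite h; field.
by move: nz; rewrite natrD !natrM -!nat1r.
Qed.

Lemma ffact_nat0 (R : realFieldType) s : (0 < s)%N -> ffact (0%:R : R) s = 0.
Proof. by case: s => // s _; rewrite ffactS mul0r. Qed.

Lemma moment (R : realFieldType) a d s : (0 < a)%N -> (0 < d)%N -> (0 < s)%N ->
  forall n m, urnE a d n m (fun y => ffact (y%:R : R) s) =
    ffact (n%:R : R) s / gbinom (m%:R + (a * s)%:R / d%:R) m.
Proof.
move=> a0 d0 s0 n m; symmetry.
apply: (@recur_uniq R a d (fun n m => ffact (n%:R : R) s / gbinom (m%:R + (a * s)%:R / d%:R) m) (fun n m => urnE a d n m (fun y => ffact (y%:R : R) s))).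
- apply: recurM => // {}n {}m.
  case: s s0 => // s _.
  have c0 : (0 : R) <= (a * s.+1)%:R / d%:R by rewrite divr_ge0.
  have g0 := @gbinom_gt0 R _ m c0.
  have c1 : (0 : R) < m.+1%:R + (a * s.+1)%:R / d%:R by rewrite ltr_pwDl.
  rewrite ffactS gbinomS (_ : m.+1%:R + _ - 1 = m%:R + (a * s.+1)%:R / d%:R); last first.
    by rewrite -natr1; ring.
  rewrite (_ : n.+1%:R - 1 = n%:R); last by rewrite -natr1; ring.
  rewrite ffactSr.
  move: g0 c1; set g := gbinom _ _ => g0 c1.
  have dnz : (d%:R : R) != 0 by rewrite pnatr_eq0 -lt0n.
  clearbody g.
  move: c1; rewrite !natrD !natrM -!natr1 => c1.
  field.
  have ha : (0 : R) < a%:R by rewrite ltr0n.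
  have hd : (0 : R) < d%:R by rewrite ltr0n.
  have hm : (0 : R) <= m%:R by rewrite ler0n.
  have hs : (0 : R) <= s%:R by rewrite ler0n.
  apply/and4P; split; apply: lt0r_neq0 => //; nra.
- exact: recur_urnE.
- by move=> m'; rewrite urnE_n0 ffact_nat0 // mul0r.
- by move=> n'; rewrite urnE_m0 gbinom0 divr1.
Qed.

Lemma stirling2_gt s j : (s < j)%N -> stirling2 s j = 0%N.
Proof.
elim: s j => [|s IH] [|j] //= h.
by rewrite !IH // ?muln0 // ltnW.
Qed.

Lemma pow_stirling (R : realFieldType) (x : R) s :
  x ^+ s = \sum_(j < s.+1) (stirling2 s j)%:R * ffact x j.
Proof.
elim: s => [|s IH]; first by rewrite big_ord1 /= ffact0 mulr1 expr0.
have key : forall j, x * ffact x j = ffact x j.+1 + j%:R * ffact x j.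
  by move=> j; rewrite ffactSr; ring.
rewrite exprS IH mulr_sumr.
rewrite (eq_bigr (fun j : 'I_s.+1 => (stirling2 s j)%:R * ffact x j.+1
   + j%:R * (stirling2 s j)%:R * ffact x j)); last first.
  by move=> j _; rewrite mulrCA key; ring.
rewrite big_split /= [RHS]big_ord_recl /= mul0r add0r.
rewrite [in RHS](eq_bigr (fun j : 'I_s.+1 => (j.+1 * stirling2 s j.+1)%:R * ffact x j.+1
   + (stirling2 s j)%:R * ffact x j.+1)); last first.
  by move=> j _; rewrite /bump /= !add0n natrD mulrDl.
rewrite big_split /= addrC; congr (_ + _).
rewrite big_ord_recl /= mul0r mul0r add0r big_ord_recr /= stirling2_gt //.
rewrite muln0 mul0r addr0; apply: eq_bigr => j _.
by rewrite /bump /= natrM.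
Qed.

Lemma power_moment (R : realFieldType) a d s : (0 < a)%N -> (0 < d)%N -> (0 < s)%N ->
  forall n m, urnE a d n m (fun y => (y%:R : R) ^+ s) =
    \sum_(0 <= j < s.+1) (stirling2 s j)%:R * ffact (n%:R : R) j
           / gbinom (m%:R + (a * j)%:R / d%:R) m.
Proof.
move=> a0 d0 s0 n m; rewrite big_mkord /urnE.
under eq_bigr => k _ do rewrite pow_stirling mulr_sumr.
rewrite exchange_big /=; apply: eq_bigr => j _.
case: j => [[|j] hj] /=.
  rewrite (_ : stirling2 s 0 = 0%N); last by move: s0; case: (s).
  by rewrite !mul0r big1 // => k _; rewrite mul0r mulr0.
rewrite -mulrA -(@moment R a d j.+1 a0 d0 (isT : (0 < j.+1)%N)) /urnE mulr_sumr.
by apply: eq_bigr => k _; rewrite mulrCA.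
Qed.


Lemma binom_prod n l k : (k <= l)%N ->
  ('C(n, l) * 'C(l, k) = 'C(n, k) * 'C(n - k, l - k))%N.
Proof.
move=> kl; case: (ltnP n l) => ln.
  rewrite bin_small // mul0n; case: (ltnP n k) => nk.
    by rewrite (bin_small nk).
  rewrite (bin_small (n := n - k)) ?muln0 //; lia.
have pos : (0 < k`! * (l - k)`! * (n - l)`!)%N by rewrite !muln_gt0 !fact_gt0.
apply/eqP; rewrite -(eqn_pmul2r pos); apply/eqP.
have E1 := bin_fact ln; have E2 := bin_fact kl.
have kn : (k <= n)%N := leq_trans kl ln.
have E3 := bin_fact kn.
have lknk : (l - k <= n - k)%N by rewrite leq_sub2r.
have E4 := bin_fact lknk.
have e : (n - k - (l - k) = n - l)%N by lia.
rewrite e in E4.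
transitivity (n`!).
  by rewrite -E1 -E2; ring.
by rewrite -E3 -E4; ring.
Qed.


Lemma binom_inv (R : realFieldType) n k :
  \sum_(l < n.+1) (-1) ^+ (l - k) * ('C(n, l)%:R * 'C(l, k)%:R) = ((k == n)%:R : R).
Proof.
case: (ltnP n k) => kn.
  rewrite big1; first by rewrite (_ : (k == n) = false) //; apply/negbTE; rewrite neq_ltn kn orbT.
  move=> [l hl] _ /=; rewrite (bin_small (n := l)) ?mulr0 ?mul0r //.
  exact: leq_ltn_trans (hl : (l <= n)%N) kn.
rewrite -(big_mkord xpredT (fun l => (-1) ^+ (l - k) * ('C(n, l)%:R * 'C(l, k)%:R))).
have kn1 : (k <= n.+1)%N by apply: ltnW.
rewrite (@big_cat_nat _ _ _ k 0 n.+1) //=.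
rewrite big1_seq ?add0r; last first.
  move=> l /andP[_]; rewrite mem_index_iota => /andP[_ lk].
  by rewrite (bin_small lk) mulr0n !mulr0.
rewrite -{1}(add0n k) big_addn.
rewrite (eq_bigr (fun j => (-1) ^+ j * ('C(n - k, j)%:R) * 'C(n, k)%:R)); last first.
  move=> j _; rewrite addnK -natrM binom_prod ?leq_addl // addnK natrM; ring.
rewrite -mulr_suml (_ : n.+1 - k = (n - k).+1)%N; last by lia.
rewrite big_mkord alt_binom subn_eq0.
case: eqP => [->|/eqP nk]; first by rewrite leqnn binn mul1r.
rewrite (_ : (n <= k)%N = false) ?mul0r //.
by apply/negbTE; rewrite -ltnNge; lia.
Qed.


Lemma gbinom_nn (R : realFieldType) m : gbinom (m%:R : R) m = 1.
Proof.
elim: m => [|m IH]; first by rewrite gbinom0.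
by rewrite gbinomS -natr1 addrK IH mulr1 natr1 divff // pnatr_eq0.
Qed.

Definition G2 (R : realFieldType) a d k n m : R :=
  \sum_(l < n.+1) (-1) ^+ (l - k) * ('C(n, l)%:R * 'C(l, k)%:R)
     / gbinom (m%:R + (l * a)%:R / d%:R) m.

Lemma formula2 (R : realFieldType) a d k : (0 < a)%N -> (0 < d)%N ->
  forall n m, urnP R a d n m k = G2 R a d k n m.
Proof.
move=> a0 d0 n m; symmetry.
apply: (@recur_uniq R a d (G2 R a d k) (fun n m => urnP R a d n m k)).
- apply: recurM => // {}n {}m.
  have -> : G2 R a d k n m.+1 = \sum_(l < n.+2) (-1) ^+ (l - k) * ('C(n, l)%:R * 'C(l, k)%:R)
     / gbinom (m.+1%:R + (l * a)%:R / d%:R) m.+1.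
    by rewrite big_ord_recr /= bin_small // mul0r mulr0 mul0r addr0.
  rewrite /G2 !mulr_sumr -big_split /=; apply: eq_bigr => l _.
  have ln : (l <= n.+1)%N by rewrite -ltnS.
  have hb := mul_bin_down n.+1 l; rewrite /= in hb.
  have dnz : (d%:R : R) != 0 by rewrite pnatr_eq0 -lt0n.
  have c0 : (0 : R) <= (l * a)%:R / d%:R by rewrite divr_ge0.
  have g0 := @gbinom_gt0 R _ m c0.
  rewrite gbinomS (_ : m.+1%:R + _ - 1 = m%:R + (l * a)%:R / d%:R); last first.
    by rewrite -natr1; ring.
  move: g0; set g := gbinom _ _ => g0; clearbody g.
  have hb' : ('C(n, l)%:R : R) = (n.+1%:R - l%:R) * 'C(n.+1, l)%:R / n.+1%:R.
    have nz1 : (n.+1%:R : R) != 0 by rewrite pnatr_eq0.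
    apply: (mulfI nz1).
    rewrite -natrM hb natrM natrB //; field; by rewrite nat1r.
  rewrite hb'.
  rewrite !natrD !natrM -!natr1.
  field.
  have ha : (0 : R) < a%:R by rewrite ltr0n.
  have hd : (0 : R) < d%:R by rewrite ltr0n.
  have hm : (0 : R) <= m%:R by rewrite ler0n.
  have hn : (0 : R) <= n%:R by rewrite ler0n.
  have hl : (0 : R) <= l%:R by rewrite ler0n.
  apply/and5P; split; apply: lt0r_neq0 => //; nra.
- exact: recur_urnP.
- move=> {}m; rewrite /G2 big_ord1 mul0n mul0r addr0 gbinom_nn divr1 /=.
  case: k => [|k] /=; first by rewrite bin0 expr0 !mul1r.
  by rewrite (bin_small (ltn0Sn k)) mulr0n !mulr0.
- move=> {}n; rewrite /G2 (eq_bigr (fun l : 'I_n.+1 => (-1) ^+ (l - k) * ('C(n, l)%:R * 'C(l, k)%:R))).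
    by rewrite binom_inv; case: n.
  by move=> l _; rewrite gbinom0 divr1.
Qed.


Definition F1 (R : realFieldType) a d k n m : R :=
  \sum_(l < m) (-1) ^+ l * ('C(m, l.+1)%:R
     * gbinom ((k%:R - 1) + (l.+1 * d)%:R / a%:R) k)
     / gbinom (n%:R + (l.+1 * d)%:R / a%:R) n.

Lemma F1rec (R : realFieldType) a d k n m : (0 < a)%N -> (0 < d)%N ->
  (a * n.+1 + d * m.+1)%:R * F1 R a d k n.+1 m.+1 =
  (a * n.+1)%:R * F1 R a d k n m.+1 + (d * m.+1)%:R * F1 R a d k n.+1 m.
Proof.
move=> a0 d0.
have -> : F1 R a d k n.+1 m = \sum_(l < m.+1) (-1) ^+ l * ('C(m, l.+1)%:R
     * gbinom ((k%:R - 1) + (l.+1 * d)%:R / a%:R) k)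
     / gbinom (n.+1%:R + (l.+1 * d)%:R / a%:R) n.+1.
  by rewrite big_ord_recr /= bin_small // mul0r mulr0 mul0r addr0.
rewrite /F1 !mulr_sumr -big_split /=; apply: eq_bigr => l _.
have ln : (l.+1 <= m.+1)%N by [].
have hb := mul_bin_down m.+1 l.+1; rewrite /= in hb.
have anz : (a%:R : R) != 0 by rewrite pnatr_eq0 -lt0n.
have c0 : (0 : R) <= (l.+1 * d)%:R / a%:R by rewrite divr_ge0.
have g0 := @gbinom_gt0 R _ n c0.
rewrite gbinomS (_ : n.+1%:R + _ - 1 = n%:R + (l.+1 * d)%:R / a%:R); last first.
  by rewrite -natr1; ring.
move: g0; set g := gbinom (n%:R + _) _ => g0; clearbody g.
set A := gbinom _ k; clearbody A.
have hb' : ('C(m, l.+1)%:R : R) = (m.+1%:R - l.+1%:R) * 'C(m.+1, l.+1)%:R / m.+1%:R.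
  have nz1 : (m.+1%:R : R) != 0 by rewrite pnatr_eq0.
  apply: (mulfI nz1).
  rewrite -natrM hb natrM natrB //; field; by rewrite nat1r.
rewrite hb'.
rewrite !natrD !natrM -!natr1.
field.
have ha : (0 : R) < a%:R by rewrite ltr0n.
have hd : (0 : R) < d%:R by rewrite ltr0n.
have hm : (0 : R) <= m%:R by rewrite ler0n.
have hn : (0 : R) <= n%:R by rewrite ler0n.
have hl : (0 : R) <= l%:R by rewrite ler0n.
apply/and5P; split; apply: lt0r_neq0 => //; nra.
Qed.

Lemma F1top (R : realFieldType) a d n m : (0 < a)%N -> (0 < d)%N ->
  (a * n.+1)%:R * F1 R a d n.+1 n m.+1 = (d * m.+1)%:R * (m == 0%N)%:R.
Proof.
move=> a0 d0.
have anz : (a%:R : R) != 0 by rewrite pnatr_eq0 -lt0n.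
rewrite /F1 mulr_sumr.
rewrite (eq_bigr (fun l : 'I_m.+1 => (d * m.+1)%:R * ((-1) ^+ l * 'C(m, l)%:R))); last first.
  move=> l _.
  have c0 : (0 : R) <= (l.+1 * d)%:R / a%:R by rewrite divr_ge0.
  have g0 := @gbinom_gt0 R _ n c0.
  rewrite (_ : n.+1%:R - 1 = n%:R); last by rewrite -natr1; ring.
  rewrite gbinomSr.
  have hb := mul_bin_diag m.+1 l; rewrite /= in hb.
  have hb' : ('C(m.+1, l.+1)%:R : R) = m.+1%:R * 'C(m, l)%:R / l.+1%:R.
    have nz1 : (l.+1%:R : R) != 0 by rewrite pnatr_eq0.
    apply: (mulfI nz1).
    rewrite -[in LHS]natrM -hb natrM; field; by rewrite nat1r.
  rewrite hb'.
  move: g0; set g := gbinom _ _ => g0; clearbody g.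
  rewrite !natrM -!natr1.
  field.
  have hn : (0 : R) <= n%:R by rewrite ler0n.
  have hl : (0 : R) <= l%:R by rewrite ler0n.
  have ha : (0 : R) < a%:R by rewrite ltr0n.
  apply/and4P; split; apply: lt0r_neq0 => //; nra.
by rewrite -alt_binom mulr_sumr.
Qed.

Definition G1 (R : realFieldType) a d k n m : R :=
  if (n < k)%N then 0 else F1 R a d k n m + ((m == 0%N) && (k == n))%:R.

Lemma formula1 (R : realFieldType) a d k : (0 < a)%N -> (0 < d)%N ->
  forall n m, urnP R a d n m k = G1 R a d k n m.
Proof.
move=> a0 d0 n m; symmetry.
apply: (@recur_uniq R a d (G1 R a d k) (fun n m => urnP R a d n m k)).
- apply: recurM => // {}n {}m; rewrite /G1.
  case: (ltngtP n.+1 k) => h.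
  + by rewrite !mulr0 addr0.
  + by rewrite /= !addr0 F1rec // andbF addr0.
  + subst k; rewrite /= addr0 mulr0 add0r.
    rewrite F1rec // F1top // mulrDr addrC.
    by case: (m) => [|m'] //=; rewrite ?addr0 ?mulr0.
- exact: recur_urnP.
- move=> {}m; rewrite /G1; case: k => [|k] //=.
  rewrite /F1 (eq_bigr (fun l : 'I_m => (-1) ^+ l * 'C(m, l.+1)%:R)); last first.
    by move=> l _; rewrite !gbinom0 divr1 mulr1.
  have E : 1 + \sum_(l < m) - ((-1) ^+ l * 'C(m, l.+1)%:R) = ((m == 0%N)%:R : R).
    rewrite -alt_binom big_ord_recl expr0 bin0 mul1r; congr (_ + _).
    by apply: eq_bigr => l _; rewrite /bump /= exprS; ring.
  rewrite sumrN in E.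
  rewrite andbT -E; ring.
- move=> {}n; rewrite /G1 /F1 big_ord0 add0r /=.
  case: ltnP => h.
    case: n h => [|n] h /=; rewrite (_ : (k == _) = false) //; apply/negbTE; rewrite neq_ltn h orbT //.
  by case: n h => [|n] h.
Qed.


Theorem corollary1 (R : realFieldType) (a d n m : nat) :
  (0 < a)%N -> (0 < d)%N -> (1 <= n)%N -> (1 <= m)%N ->
  (forall k : nat, (k <= n)%N ->
     urnP R a d n m k =
       \sum_(1 <= l < m.+1)
         (-1) ^+ (l - 1) * ('C(m, l)%:R
           * gbinom ((k%:R - 1) + (l * d)%:R / a%:R) k)
           / gbinom (n%:R + (l * d)%:R / a%:R) n
     /\
     urnP R a d n m k =
       \sum_(k <= l < n.+1)
         (-1) ^+ (l - k) * ('C(n, l)%:R * 'C(l, k)%:R)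
           / gbinom (m%:R + (l * a)%:R / d%:R) m)
  /\
  (forall s : nat, (1 <= s)%N ->
     urnE a d n m (fun y => ffact (y%:R : R) s) =
       ffact (n%:R : R) s / gbinom (m%:R + (a * s)%:R / d%:R) m
     /\
     urnE a d n m (fun y => (y%:R : R) ^+ s) =
       \sum_(0 <= j < s.+1)
         (stirling2 s j)%:R * ffact (n%:R : R) j
           / gbinom (m%:R + (a * j)%:R / d%:R) m).
Proof.
move=> a0 d0 n1 m1; split=> [k kn|s s1]; last first.
  by split; [apply: moment | apply: power_moment].
split.
  rewrite formula1 // /G1 ltnNge kn /= (_ : (m == 0%N) = false) ?addr0; last first.
    by case: (m) m1.
  rewrite /F1 big_add1 /= big_mkord; apply: eq_bigr => l _.
  by rewrite subn1.
rewrite formula2 // /G2.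
rewrite -(big_mkord xpredT (fun l => (-1) ^+ (l - k) * ('C(n, l)%:R * 'C(l, k)%:R)
     / gbinom (m%:R + (l * a)%:R / d%:R) m)).
have kn1 : (k <= n.+1)%N by apply: leqW.
rewrite (@big_cat_nat _ _ _ k 0 n.+1) //= big1_seq ?add0r //.
move=> l /andP[_]; rewrite mem_index_iota => /andP[_ lk].
by rewrite (bin_small lk) mulr0n !mulr0 mul0r.
Qed.
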